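(* Consider the stochastic epidemic model described in the context under the linear control policy $u(k)=K\,I(k)$, $k\ge0$, with a constant gain $K$. Suppose $$\overline{\delta}<\frac{(1-d_{\max})\,\overline{v}}{v_{\max}}\qquad\text{and}\qquad \frac{\overline{\delta}-\overline{d_I}}{\overline{v}}<K<\frac{1-d_{\max}}{v_{\max}}.$$ Then: (i) $\lim_{k\to\infty}\mathbb{E}[I(k)]/I_0=0$; (ii) $\mathbb{E}[I(k)]\le I_0$ for all $k\ge 0$; (iii) if $K=(\overline{\delta}-\overline{d_I})/\overline{v}$, then $\mathbb{E}[I(k)]=I_0$ for all $k$.
   Context: Time is indexed by days $k=0,1,2,\dots$. Let $(\delta(k))_{k\ge0}$, $(d_I(k))_{k\ge0}$, $(v(k))_{k\ge0}$ be three mutually independent sequences of random variables, each sequence i.i.d. in $k$, with $0\le \delta(k)\le \delta_{\max}$, $0\le d_I(k)\le d_{\max}$ where $d_{\max}<1$, and $0<v_{\min}\le v(k)\le v_{\max}\le 1$; moreover $\delta_{\max}$ lies in the support of $\delta(k)$, $d_{\max}$ in the support of $d_I(k)$, and $v_{\min},v_{\max}$ in the support of $v(k)$. Write $\overline{\delta}=\mathbb{E}[\delta(k)]$, $\overline{d_I}=\mathbb{E}[d_I(k)]$, $\overline{v}=\mathbb{E}[v(k)]$. Given a control sequence $u(k)\ge 0$, the susceptible, infected, recovered and deceased cases evolve by $S(k+1)=S(k)-\delta(k)I(k)$, $I(k+1)=(1+\delta(k))I(k)-v(k)u(k)-d_I(k)I(k)$, $R(k+1)=R(k)+v(k)u(k)$,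 $D(k+1)=D(k)+d_I(k)I(k)$, with initial values $S(0)=S_0$, $I(0)=I_0>0$, $R(0)=D(0)=0$, where $I_0\delta_{\max}<S_0$. *)

(* Defs.v *)
From HB Require Import structures.
From mathcomp Require Import all_boot all_order all_algebra.
From mathcomp Require Import all_classical all_reals all_analysis.
Set Implicit Arguments. Unset Strict Implicit. Unset Printing Implicit Defensive.
Import Order.TTheory GRing.Theory Num.Theory.
Local Open Scope classical_set_scope.
Local Open Scope ring_scope.

Section defs.
Context {d : measure_display} {T : measurableType d} {R : realType}.
Variable P : probability T R.

Definition mean (X : T -> R) : R := fine ('E_P[X])%E.

(* The three sequences (delta k), (dI k), (v k) are mutually independent
   sequences of mutually independent random variables: the whole family
   {delta k, dI k, v k : k} is mutually independent.  Stated as the product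
   rule over every initial segment k < n with arbitrary Borel sets (taking
   some sets to be setT gives the product rule for every finite subfamily). *)
Definition joint_indep (delta dI v : nat -> T -> R) : Prop :=
  forall (n : nat) (A B C : nat -> set R),
    (forall k, measurable (A k)) -> (forall k, measurable (B k)) ->
    (forall k, measurable (C k)) ->
    P (\big[setI/setT]_(k < n)
          (delta k @^-1` A k `&` dI k @^-1` B k `&` v k @^-1` C k))
    = (\prod_(k < n)
          (P (delta k @^-1` A k) * P (dI k @^-1` B k) * P (v k @^-1` C k)))%E.

Definition ident_distr (X : nat -> T -> R) : Prop :=
  forall k (A : set R), measurable A -> P (X k @^-1` A) = P (X 0%N @^-1` A).

Definition in_support (X : T -> R) (a : R) : Prop :=
  forall e : R, 0 < e ->
    let N := [set w | `|X w - a| < e] in (0 < P N)%E.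
End defs.

Fixpoint Itraj {T : Type} {R : pzRingType} (delta dI v : nat -> T -> R)
    (K I0 : R) (k : nat) (w : T) : R :=
  match k with
  | 0 => I0
  | k'.+1 =>
      let Ik := Itraj delta dI v K I0 k' w in
      (1 + delta k' w) * Ik - v k' w * (K * Ik) - dI k' w * Ik
  end.

(* Main.v *)
Require Import Defs.
From HB Require Import structures.
From mathcomp Require Import all_boot all_order all_algebra.
From mathcomp Require Import all_classical all_reals all_analysis.
From mathcomp Require Import ring lra zify measurable_realfun.
Set Implicit Arguments. Unset Strict Implicit. Unset Printing Implicit Defensive.
Import Order.TTheory GRing.Theory Num.Theory.
Local Open Scope classical_set_scope.
Local Open Scope ring_scope.


Section basics.
Context {d : measure_display} {T : measurableType d} {R : realType}.
Variable P : probability T R.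

Definition bnd (f : T -> R) := measurable_fun setT f /\ exists C : R, forall w, `|f w| <= C.

Definition Ex (f : T -> R) : R := \int[P]_w f w.

Lemma bnd_int f : bnd f -> P.-integrable setT (EFin \o f).
Proof.
move=> [mf [C hC]]; apply/integrableP; split; first exact/measurable_EFinP.
have C0 : 0 <= C by apply: le_trans (hC point).
apply: (@le_lt_trans _ _ (C%:E * P setT)%E).
  apply: integral_le_bound => //; first exact/measurable_EFinP.
  by apply: aeW => w _ /=; rewrite lee_fin.
by rewrite probability_setT mule1 ltry.
Qed.

Lemma bnd_E f : bnd f -> ('E_P[f] = (Ex f)%:E)%E.
Proof.
move=> bf; rewrite unlock /Ex /Rintegral fineK //.
exact: integrable_fin_num (bnd_int bf).
Qed.

Lemma bndD f g : bnd f -> bnd g -> bnd (fun w => f w + g w).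
Proof.
move=> [mf [C hC]] [mg [D hD]]; split; first exact: measurable_funD.
exists (C + D) => w; apply: le_trans (ler_normD _ _) _; exact: lerD.
Qed.

Lemma bndN f : bnd f -> bnd (fun w => - f w).
Proof.
move=> [mf [C hC]]; split; first exact: measurableT_comp.
by exists C => w; rewrite normrN.
Qed.

Lemma bndB f g : bnd f -> bnd g -> bnd (fun w => f w - g w).
Proof. by move=> bf bg; apply: bndD => //; exact: bndN. Qed.

Lemma bndM f g : bnd f -> bnd g -> bnd (fun w => f w * g w).
Proof.
move=> [mf [C hC]] [mg [D hD]]; split; first exact: measurable_funM.
exists (C * D) => w; rewrite normrM; apply: ler_pM => //.
Qed.

Lemma bnd_cst c : bnd (fun _ => c).
Proof. by split; [exact: measurable_cst | exists `|c|]. Qed.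

Lemma bnd_indic A : measurable A -> bnd (\1_A : T -> R).
Proof.
move=> mA; split; first exact: measurable_indic.
exists 1 => w; rewrite /indic; case: (w \in A); rewrite ?normr1 ?normr0 //.
Qed.

Lemma ExD f g : bnd f -> bnd g -> Ex (fun w => f w + g w) = Ex f + Ex g.
Proof. by move=> bf bg; rewrite /Ex RintegralD //; exact: bnd_int. Qed.

Lemma ExB f g : bnd f -> bnd g -> Ex (fun w => f w - g w) = Ex f - Ex g.
Proof. by move=> bf bg; rewrite /Ex RintegralB //; exact: bnd_int. Qed.

Lemma ExZ c f : bnd f -> Ex (fun w => c * f w) = c * Ex f.
Proof. by move=> bf; rewrite /Ex RintegralZl //; exact: bnd_int. Qed.

Lemma Ex_cst c : Ex (fun _ => c) = c.
Proof.
rewrite /Ex Rintegral_cst //; suff -> : fine (P setT) = 1 by rewrite mulr1.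
by rewrite probability_setT.
Qed.

Lemma Ex_indic A : measurable A -> Ex (\1_A) = fine (P A).
Proof. by move=> mA; rewrite /Ex /Rintegral integral_indic // setIT. Qed.

Lemma Ex_le f g : bnd f -> bnd g -> (forall w, f w <= g w) -> Ex f <= Ex g.
Proof. by move=> bf bg fg; rewrite /Ex le_Rintegral //; exact: bnd_int. Qed.

Lemma Ex_ext f g : (forall w, f w = g w) -> Ex f = Ex g.
Proof. by move=> fg; rewrite /Ex; apply: eq_Rintegral => w _; exact: fg. Qed.

End basics.


Definition gr {R : realType} (N : nat) (h x : R) : R :=
  \sum_(i < N) (if (i.+1%:R * h <= x) then h else 0).


Lemma gr_aux {R : realType} (N : nat) (h x : R) : 0 < h -> 0 <= x ->
  gr N h x <= x /\ gr N h x <= N%:R * h /\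
  (x - h <= gr N h x \/ gr N h x = N%:R * h).
Proof.
move=> h0 x0; elim: N => [|N [IH1 [IH2 IH3]]].
  by rewrite /gr big_ord0 mul0r; split => //; split => //; right.
rewrite /gr big_ord_recr /= -/(gr N h x) -natr1.
case: ifPn => [c|].
  have e : gr N h x = N%:R * h by case: IH3 => // H; lra.
  rewrite e; split; first lra. split; first lra. by right; lra.
rewrite -ltNge => c; rewrite addr0; split => //; split; first lra.
by left; case: IH3 => H; lra.
Qed.

Lemma gr_bound {R : realType} (N : nat) (h x : R) : 0 < h -> 0 <= x ->
  x <= N%:R * h -> x - h <= gr N h x <= x.
Proof.
move=> h0 x0 xN; have [H1 [H2 H3]] := gr_aux N h0 x0.
by apply/andP; split => //; case: H3 => H //; lra.
Qed.

Lemma small0 {R : realType} (D A : R) : 0 <= A ->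
  (forall h, 0 < h -> `|D| <= A * h) -> D = 0.
Proof.
move=> A0 H; apply/normr0_eq0/eqP; rewrite eq_le normr_ge0 andbT.
apply/ler_addgt0Pr => e e0; rewrite add0r.
have hp : 0 < e / (A + 1) by apply: divr_gt0 => //; lra.
apply: (le_trans (H _ hp)).
rewrite mulrA ler_pdivrMr; last lra.
have : 0 <= A * e by apply: mulr_ge0 => //; lra.
nra.
Qed.

Lemma in_ge (R : realType) (T : Type) (X : T -> R) t w :
  (w \in X @^-1` `[t, +oo[) = (t <= X w).
Proof. apply/idP/idP; rewrite in_setE /= in_itv /= andbT //. Qed.

Lemma indic_ge (R : realType) (T : Type) (X : T -> R) t w :
  (\1_(X @^-1` `[t, +oo[) w : R) = (t <= X w)%R%:R.
Proof. by rewrite indicE in_ge. Qed.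

Section key.
Context {d : measure_display} {T : measurableType d} {R : realType}.
Variable P : probability T R.

Lemma bnd_sum N (F : 'I_N -> T -> R) : (forall i, bnd (F i)) ->
  bnd (fun w => \sum_(i < N) F i w) /\
  Ex P (fun w => \sum_(i < N) F i w) = \sum_(i < N) Ex P (F i).
Proof.
elim: N F => [|N IH] F hF.
  under eq_fun do rewrite big_ord0.
  by rewrite big_ord0 Ex_cst; split => //; exact: bnd_cst.
under eq_fun do rewrite big_ord_recr.
have [b1 e1] := IH (fun i => F (widen_ord (leqnSn N) i)) (fun i => hF _).
split; first exact: bndD.
by rewrite ExD // e1 big_ord_recr.
Qed.

Lemma key (Z X : T -> R) (M q : R) : bnd Z -> measurable_fun setT X ->
  (forall w, 0 <= X w <= M) ->
  (forall t, Ex P (fun w => Z w * \1_(X @^-1` `[t, +oo[) w) =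
             q * fine (P (X @^-1` `[t, +oo[))) ->
  Ex P (fun w => Z w * X w) = q * Ex P X.
Proof.
move=> bZ mX hX hZ.
have mS t : measurable (X @^-1` `[t, +oo[).
  by rewrite -[X @^-1` _]setTI; apply: mX => //; exact: measurable_itv.
have bX : bnd X.
  split => //; exists M => w; have /andP[a b] := hX w; by rewrite ger0_norm.
have M0 : 0 <= M by have /andP[a b] := hX point; exact: le_trans b.
case: (bZ) => mZ [C hC]; have C0 : 0 <= C by exact: le_trans (hC point).
apply/eqP; rewrite -subr_eq0; apply/eqP.
apply: (small0 (A := C + `|q|)); first by apply: addr_ge0.
move=> h h0.
pose N := Num.Def.archi_bound (M / h).
have MN : M <= N%:R * h.
  have := archi_boundP (divr_ge0 M0 (ltW h0)); rewrite -/N ltr_pdivrMr // => H.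
  exact: ltW.
pose F (i : 'I_N) w := h * \1_(X @^-1` `[i.+1%:R * h, +oo[) w.
have bF i : bnd (F i) by apply: bndM; [exact: bnd_cst | exact: bnd_indic].
have bZF i : bnd (fun w => Z w * F i w) by exact: bndM.
have [bg eg] := bnd_sum bF.
have [bZg eZg] := bnd_sum bZF.
pose g w := gr N h (X w).
have gE w : g w = \sum_(i < N) F i w.
  by rewrite /g /gr; apply: eq_bigr => i _; rewrite /F indic_ge; case: ifP;
    rewrite ?mulr1 ?mulr0.
have gb w : X w - h <= g w <= X w.
  by have /andP[a b] := hX w; apply: gr_bound => //; exact: le_trans MN.
have Exg : Ex P g = \sum_(i < N) h * fine (P (X @^-1` `[i.+1%:R * h, +oo[)).
  rewrite (Ex_ext _ gE) eg; apply: eq_bigr => i _.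
  by rewrite /F ExZ ?Ex_indic //; exact: bnd_indic.
have ExZg : Ex P (fun w => Z w * g w) = q * Ex P g.
  rewrite (@Ex_ext _ _ _ P _ (fun w => \sum_(i < N) Z w * F i w)); last first.
    by move=> w; rewrite gE mulr_sumr.
  rewrite eZg Exg mulr_sumr; apply: eq_bigr => i _.
  rewrite /F (@Ex_ext _ _ _ P _ (fun w => h * (Z w * \1_(X @^-1` `[i.+1%:R * h, +oo[) w))).
    rewrite ExZ; last by apply: bndM => //; exact: bnd_indic.
    by rewrite hZ mulrCA.
  by move=> w; rewrite mulrCA.
have bg' : bnd g by apply: (eq_ind _ bnd bg); apply: funext => w; rewrite gE.
have bZX : bnd (fun w => Z w * X w) by exact: bndM.
have bZg' : bnd (fun w => Z w * g w) by exact: bndM.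
have pb w : `|Z w * X w - Z w * g w| <= C * h.
  rewrite -mulrBr normrM; apply: ler_pM => //; have /andP[a b] := gb w;
    rewrite ger0_norm; lra.
have a1 : `|Ex P (fun w => Z w * X w) - Ex P (fun w => Z w * g w)| <= C * h.
  rewrite -ExB // ler_norml; apply/andP; split.
    rewrite -(Ex_cst P (- (C * h))); apply: Ex_le => //; first exact: bnd_cst.
      by apply: bndB.
    by move=> w; have := pb w; rewrite ler_norml => /andP[].
  rewrite -(Ex_cst P (C * h)); apply: Ex_le => //; first by apply: bndB.
    exact: bnd_cst.
  by move=> w; have := pb w; rewrite ler_norml => /andP[].
have a2 : `|Ex P X - Ex P g| <= h.
  rewrite -ExB // ler_norml; apply/andP; split.
    rewrite -(Ex_cst P (- h)); apply: Ex_le => //; first exact: bnd_cst.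
      by apply: bndB.
    by move=> w; have /andP[a b] := gb w; lra.
  rewrite -(Ex_cst P h); apply: Ex_le => //; first by apply: bndB.
    exact: bnd_cst.
  by move=> w; have /andP[a b] := gb w; lra.
have -> : Ex P (fun w => Z w * X w) - q * Ex P X =
  (Ex P (fun w => Z w * X w) - Ex P (fun w => Z w * g w)) - q * (Ex P X - Ex P g).
  by rewrite ExZg; ring.
apply: le_trans (ler_normB _ _) _.
rewrite normrM mulrDl; apply: lerD => //.
by rewrite [_ * h]mulrC [X in _ <= X]mulrC; apply: ler_wpM2l.
Qed.

End key.


Section main.
Context {d : measure_display} {T : measurableType d} {R : realType}.
Variable P : probability T R.
Variables (dl dI v : nat -> T -> R) (M K I0 : R).
Hypothesis mdl : forall k, measurable_fun setT (dl k).
Hypothesis mdI : forall k, measurable_fun setT (dI k).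
Hypothesis mv : forall k, measurable_fun setT (v k).
Hypothesis bdl : forall k w, 0 <= dl k w <= M.
Hypothesis bdI : forall k w, 0 <= dI k w <= M.
Hypothesis bv : forall k w, 0 <= v k w <= M.
Hypothesis hind : joint_indep P dl dI v.

Definition Y j c : T -> R := match c with 0 => dl j | 1 => dI j | _ => v j end.

Lemma mY j c : measurable_fun setT (Y j c).
Proof. by case: c => [|[|c]]; [exact: mdl|exact: mdI|exact: mv]. Qed.

Lemma bY j c w : 0 <= Y j c w <= M.
Proof. by case: c => [|[|c]]; [exact: bdl|exact: bdI|exact: bv]. Qed.

Lemma bndY j c : bnd (Y j c).
Proof.
split; first exact: mY.
by exists M => w; have /andP[a b] := bY j c w; rewrite ger0_norm.
Qed.

Lemma mpre j c A : measurable A -> measurable (Y j c @^-1` A).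
Proof. by move=> mA; rewrite -[_ @^-1` _]setTI; apply: mY. Qed.

Definition ev N (S : nat -> nat -> set R) : set T :=
  \big[setI/setT]_(j < N)
     (Y j 0 @^-1` S j 0 `&` Y j 1 @^-1` S j 1 `&` Y j 2 @^-1` S j 2).

Lemma ev_mem N S w : ev N S w <->
  (forall j c, (j < N)%N -> (c < 3)%N -> S j c (Y j c w)).
Proof.
elim: N => [|N IH].
  by rewrite /ev big_ord0; split.
rewrite /ev big_ord_recr /= -/(ev N S); split.
  move=> [/IH H1 [[a b] c]] j c' jN c3.
  move: jN; rewrite ltnS leq_eqVlt => /orP[/eqP ->|jN]; last exact: H1.
  by case: c' c3 => [|[|[|]]].
move=> H; split.
  by apply/IH => j c jN c3; apply: H => //; exact: ltnW.
by split; [split|]; apply: H.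
Qed.

Lemma mev N S : (forall j c, measurable (S j c)) -> measurable (ev N S).
Proof.
move=> mS; apply: bigsetI_measurable => j _.
by apply: measurableI; [apply: measurableI|]; apply: mpre.
Qed.

Lemma Pev N S : (forall j c, measurable (S j c)) ->
  P (ev N S) = (\prod_(j < N) (P (Y j 0%N @^-1` S j 0%N) * P (Y j 1%N @^-1` S j 1%N)
     * P (Y j 2%N @^-1` S j 2%N)))%E.
Proof.
move=> mS; exact: (hind N (fun j => mS j 0%N) (fun j => mS j 1%N) (fun j => mS j 2%N)).
Qed.

Definition upd (S : nat -> nat -> set R) k c0 t : nat -> nat -> set R :=
  fun j c => if (j == k) && (c == c0) then S j c `&` `[t, +oo[ else S j c.

Lemma mupd S k c0 t : (forall j c, measurable (S j c)) ->
  forall j c, measurable (upd S k c0 t j c).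
Proof.
move=> mS j c; rewrite /upd; case: ifP => _ //.
by apply: measurableI => //; exact: measurable_itv.
Qed.

Lemma ev_upd N S k c0 t : (k < N)%N -> (c0 < 3)%N ->
  ev N (upd S k c0 t) = ev N S `&` Y k c0 @^-1` `[t, +oo[.
Proof.
move=> kN c3; apply/seteqP; split => w.
  move/ev_mem => H; split.
    apply/ev_mem => j c jN c3'; have := H j c jN c3'; rewrite /upd.
    by case: ifP => // _ [].
  by have := H k c0 kN c3; rewrite /upd !eqxx /= => -[].
move=> [/ev_mem H1 H2]; apply/ev_mem => j c jN c3'; rewrite /upd.
case: ifP => [/andP[/eqP jk /eqP cc]|_]; last exact: H1.
by split; [exact: H1 | rewrite jk cc].
Qed.

Lemma Pfin A : measurable A -> P A \is a fin_num.
Proof.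
move=> mA; rewrite ge0_fin_numE //.
by apply: le_lt_trans (probability_le1 P mA) _; rewrite ltey.
Qed.

Lemma Pupd N S k c0 t : (forall j c, measurable (S j c)) ->
  (forall c, S k c = setT) -> (k < N)%N -> (c0 < 3)%N ->
  P (ev N (upd S k c0 t)) = (P (Y k c0 @^-1` `[t, +oo[) * P (ev N S))%E.
Proof.
move=> mS Sk kN c3; rewrite !Pev //; last exact: mupd.
rewrite (bigD1 (Ordinal kN)) //= [in RHS](bigD1 (Ordinal kN)) //=.
rewrite muleA; congr (_ * _)%E; last first.
  apply: eq_bigr => j /= jk; rewrite /upd.
  by have -> : (j == k :> nat) = false by apply/negbTE.
rewrite /upd eqxx /= !Sk !preimage_setT !probability_setT !mule1.
by case: c0 c3 => [|[|[|]]] //= _; rewrite ?setTI ?probability_setT ?mule1 ?mul1e.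
Qed.

Lemma bndI k : bnd (Itraj dl dI v K I0 k).
Proof.
elim: k => [|k IH]; first exact: bnd_cst.
have -> : Itraj dl dI v K I0 k.+1 = fun w =>
   (1 + dl k w) * Itraj dl dI v K I0 k w - v k w * (K * Itraj dl dI v K I0 k w)
   - dI k w * Itraj dl dI v K I0 k w by [].
apply: bndB; [apply: bndB|]; apply: bndM => //.
- by apply: bndD; [exact: bnd_cst | exact: (bndY k 0)].
- exact: (bndY k 2).
- by apply: bndM => //; exact: bnd_cst.
- exact: (bndY k 1).
Qed.

Definition m := 1 + Ex P (dl 0%N) - K * Ex P (v 0%N) - Ex P (dI 0%N).

Hypothesis edl : forall k, Ex P (dl k) = Ex P (dl 0%N).
Hypothesis edI : forall k, Ex P (dI k) = Ex P (dI 0%N).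
Hypothesis ev_ : forall k, Ex P (v k) = Ex P (v 0%N).

Lemma claim k : forall N S, (k < N)%N ->
  (forall j c, (j < k)%N -> S j c = setT) -> (forall j c, measurable (S j c)) ->
  Ex P (fun w => Itraj dl dI v K I0 k w * \1_(ev N S) w) =
  I0 * m ^+ k * fine (P (ev N S)).
Proof.
elim: k => [|k IH] N S kN Striv mS.
  rewrite expr0 mulr1 /= ExZ ?Ex_indic //; first exact: mev.
  exact/bnd_indic/mev.
set q := I0 * m ^+ k * fine (P (ev N S)).
have kN' : (k < N)%N by lia.
have Strivk : forall j c, (j < k)%N -> S j c = setT.
  by move=> j c jk; apply: Striv; lia.
have Sk : forall c, S k c = setT by move=> c; apply: Striv; lia.
pose Z w := Itraj dl dI v K I0 k w * \1_(ev N S) w.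
have bZ : bnd Z by apply: bndM; [exact: bndI | exact/bnd_indic/mev].
have IHZ : Ex P Z = q by exact: IH.
have slot c : (c < 3)%N -> Ex P (fun w => Z w * Y k c w) = q * Ex P (Y k c).
  move=> c3; apply: (key (M := M)) => //; [exact: mY | exact: bY |].
  move=> t.
  rewrite (@Ex_ext _ _ _ P _
    (fun w => Itraj dl dI v K I0 k w * \1_(ev N (upd S k c t)) w)); last first.
    by move=> w; rewrite /Z ev_upd // indicI /= mulrA.
  rewrite IH //; last exact: mupd.
    rewrite Pupd // fineM ?Pfin //.
    - by rewrite /q; ring.
    - by apply: mpre; exact: measurable_itv.
    - exact: mev.
  move=> j c' jk; rewrite /upd.
  have -> : (j == k) = false by apply/negbTE; rewrite neq_ltn jk.
  exact: Strivk.
have b0 : bnd (fun w => Z w * Y k 0%N w) by apply: bndM => //; exact: bndY.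
have b1 : bnd (fun w => Z w * Y k 1%N w) by apply: bndM => //; exact: bndY.
have b2 : bnd (fun w => K * (Z w * Y k 2%N w)).
  by apply: bndM; [exact: bnd_cst | apply: bndM => //; exact: bndY].
have e w : Itraj dl dI v K I0 k.+1 w * \1_(ev N S) w =
   Z w + Z w * Y k 0%N w - K * (Z w * Y k 2%N w) - Z w * Y k 1%N w.
  by rewrite /Z /=; ring.
rewrite (Ex_ext _ e) ExB; last 2 first.
- by apply: bndB => //; apply: bndD.
- exact: b1.
rewrite ExB; last 2 first.
- by apply: bndD.
- exact: b2.
rewrite ExD // ExZ; last by apply: bndM => //; exact: bndY.
rewrite IHZ !slot // /= edl edI ev_ exprS /q /m; ring.
Qed.

Lemma EI k : Ex P (Itraj dl dI v K I0 k) = I0 * m ^+ k.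
Proof.
have evT : ev k.+1 (fun _ _ => setT) = setT.
  by apply/seteqP; split => w // _; apply/ev_mem.
have := @claim k k.+1 (fun _ _ => setT) (ltnSn k) (fun _ _ _ => erefl) (fun _ _ => measurableT).
rewrite evT probability_setT /= mulr1 => <-.
by apply: Ex_ext => w; rewrite indicE in_setT mulr1.
Qed.

End main.


Lemma Ex_ident {d : measure_display} {T : measurableType d} {R : realType}
  (P : probability T R) (X Y : {RV P >-> R}) : bnd (X : T -> R) -> bnd (Y : T -> R) ->
  (forall A, measurable A -> P (X @^-1` A) = P (Y @^-1` A)) -> Ex P X = Ex P Y.
Proof.
move=> bX bY hXY; rewrite /Ex /Rintegral; congr fine.
have h1 := @integral_distribution _ _ _ _ _ P X EFin (@EFin_measurable _ setT) (bnd_int P bX).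
have h2 := @integral_distribution _ _ _ _ _ P Y EFin (@EFin_measurable _ setT) (bnd_int P bY).
rewrite /= in h1 h2.
rewrite -h1 -h2; apply: eq_measure_integral => A mA _.
exact: (hXY A mA).
Qed.

Lemma mean_Ex {d : measure_display} {T : measurableType d} {R : realType}
  (P : probability T R) (X : T -> R) : bnd X -> mean P X = Ex P X.
Proof. by move=> bX; rewrite /mean bnd_E. Qed.

Unset Implicit Arguments.

Theorem theorem2 (R : realType) (d : measure_display) (T : measurableType d)
  (P : probability T R) (delta dI v : nat -> {RV P >-> R})
  (delta_max d_max v_min v_max S0 I0 K : R)
  (hdelta : forall k w, 0 <= delta k w <= delta_max)
  (hdI : forall k w, 0 <= dI k w <= d_max)
  (hdmax : d_max < 1)
  (hvmin : 0 < v_min)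
  (hv : forall k w, v_min <= v k w <= v_max)
  (hvmax : v_max <= 1)
  (hindep : joint_indep P (fun k => delta k : T -> R) (fun k => dI k : T -> R)
              (fun k => v k : T -> R))
  (hid_delta : ident_distr P (fun k => delta k : T -> R))
  (hid_dI : ident_distr P (fun k => dI k : T -> R))
  (hid_v : ident_distr P (fun k => v k : T -> R))
  (hsupp_delta : forall k, in_support P (delta k) delta_max)
  (hsupp_dI : forall k, in_support P (dI k) d_max)
  (hsupp_vmin : forall k, in_support P (v k) v_min)
  (hsupp_vmax : forall k, in_support P (v k) v_max)
  (hI0 : 0 < I0) (hS0 : I0 * delta_max < S0)
  (hcond : mean P (delta 0%N) < (1 - d_max) * mean P (v 0%N) / v_max) :
  let I := Itraj (fun k => delta k : T -> R) (fun k => dI k : T -> R)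
             (fun k => v k : T -> R) K I0 in
  ((mean P (delta 0%N) - mean P (dI 0%N)) / mean P (v 0%N) < K ->
   K < (1 - d_max) / v_max ->
     ((fun k => ('E_P[I k] * (I0^-1)%:E)%E) @ \oo --> (0 : \bar R))
     /\ (forall k, ('E_P[I k] <= I0%:E)%E))
  /\
  (K = (mean P (delta 0%N) - mean P (dI 0%N)) / mean P (v 0%N) ->
     forall k, ('E_P[I k] = I0%:E)%E).
Proof.
move=> I.
pose dl := fun k => (delta k : T -> R).
pose di := fun k => (dI k : T -> R).
pose vv := fun k => (v k : T -> R).
have dm0 : 0 <= delta_max by have /andP[a b] := hdelta 0%N point; exact: le_trans b.
have di0 : 0 <= d_max by have /andP[a b] := hdI 0%N point; exact: le_trans b.
have vm0 : 0 < v_max by have /andP[a b] := hv 0%N point; lra.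
pose M := delta_max + d_max + v_max.
have bdl : forall k w, 0 <= dl k w <= M.
  by move=> k w; have /andP[a b] := hdelta k w; apply/andP; split; rewrite /M /dl /di /vv; lra.
have bdI : forall k w, 0 <= di k w <= M.
  by move=> k w; have /andP[a b] := hdI k w; apply/andP; split; rewrite /M /dl /di /vv; lra.
have bv : forall k w, 0 <= vv k w <= M.
  by move=> k w; have /andP[a b] := hv k w; apply/andP; split; rewrite /M /dl /di /vv; lra.
have mdl : forall k, measurable_fun setT (dl k) by move=> k; exact: measurable_funPT.
have mdI : forall k, measurable_fun setT (di k) by move=> k; exact: measurable_funPT.
have mv : forall k, measurable_fun setT (vv k) by move=> k; exact: measurable_funPT.
have bndg (f : T -> R) : measurable_fun setT f -> (forall w, 0 <= f w <= M) -> bnd f.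
  move=> mf hf; split => //; exists M => w; have /andP[a b] := hf w.
  by rewrite ger0_norm.
have bndl k : bnd (dl k) by exact: bndg (mdl k) (bdl k).
have bndi k : bnd (di k) by exact: bndg (mdI k) (bdI k).
have bndv k : bnd (vv k) by exact: bndg (mv k) (bv k).
have edl k : Ex P (dl k) = Ex P (dl 0%N).
  by apply: Ex_ident; [apply: bndl|apply: bndl|move=> A mA; exact: hid_delta].
have edI k : Ex P (di k) = Ex P (di 0%N).
  by apply: Ex_ident; [apply: bndi|apply: bndi|move=> A mA; exact: hid_dI].
have evv k : Ex P (vv k) = Ex P (vv 0%N).
  by apply: Ex_ident; [apply: bndv|apply: bndv|move=> A mA; exact: hid_v].
have EIk k : ('E_P[I k] = (I0 * m P dl di vv K ^+ k)%:E)%E.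
  rewrite bnd_E; last exact: (bndI K I0 mdl mdI mv bdl bdI bv).
  by rewrite (EI K I0 mdl mdI mv bdl bdI bv hindep edl edI evv).
have ma : mean P (delta 0%N) = Ex P (dl 0%N) by apply: mean_Ex; apply: bndl.
have mb : mean P (dI 0%N) = Ex P (di 0%N) by apply: mean_Ex; apply: bndi.
have mc : mean P (v 0%N) = Ex P (vv 0%N) by apply: mean_Ex; apply: bndv.
rewrite ma mb mc.
set a := Ex P (dl 0%N); set b := Ex P (di 0%N); set c := Ex P (vv 0%N).
have mE : m P dl di vv K = 1 + a - K * c - b by [].
have a0 : 0 <= a.
  rewrite /a -(Ex_cst P 0); apply: Ex_le; [exact: bnd_cst|exact: bndl|].
  by move=> w; have /andP[] := hdelta 0%N w.
have b0 : 0 <= b.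
  rewrite /b -(Ex_cst P 0); apply: Ex_le; [exact: bnd_cst|exact: bndi|].
  by move=> w; have /andP[] := hdI 0%N w.
have b1 : b <= d_max.
  rewrite /b -(Ex_cst P d_max); apply: Ex_le; [exact: bndi|exact: bnd_cst|].
  by move=> w; have /andP[] := hdI 0%N w.
have c0 : v_min <= c.
  rewrite /c -(Ex_cst P v_min); apply: Ex_le; [exact: bnd_cst|exact: bndv|].
  by move=> w; have /andP[] := hv 0%N w.
have c1 : c <= v_max.
  rewrite /c -(Ex_cst P v_max); apply: Ex_le; [exact: bndv|exact: bnd_cst|].
  by move=> w; have /andP[] := hv 0%N w.
have cpos : 0 < c by lra.
split.
  move=> hK1 hK2.
  have hK1' : a - b < K * c by move: hK1; rewrite ltr_pdivrMr.
  have hK2' : K * v_max < 1 - d_max by move: hK2; rewrite ltr_pdivlMr.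
  have mlt1 : m P dl di vv K < 1 by rewrite mE; lra.
  have mgt0 : 0 < m P dl di vv K.
    rewrite mE; have [K0|K0] := leP 0 K.
      have : K * c <= K * v_max by apply: ler_wpM2l.
      lra.
    have : K * c <= 0 by apply: mulr_le0_ge0 => //; lra.
    lra.
  split.
    have -> : (fun k => ('E_P[I k] * (I0^-1)%:E)%E) =
              (fun k => (m P dl di vv K ^+ k)%:E).
      apply: funext => k; rewrite EIk -EFinM; congr (_%:E).
      by field; lra.
    apply: cvg_EFin; first by near=> k.
    by apply: cvg_expr; rewrite ger0_norm; lra.
  move=> k; rewrite EIk lee_fin ger_pMr //.
  by apply: exprn_ile1; lra.
move=> hK k; rewrite EIk.
have -> : m P dl di vv K = 1 by rewrite mE hK; field; lra.
by rewrite expr1n mulr1.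
Unshelve. all: by end_near.
Qed.
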